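(* Fix integers $0\le d\le m$, $\delta\in(0,1)$, $\chi>0$. There is $\varepsilon_0>0$ such that for all $0<\varepsilon<\varepsilon_0$: let $r>0$ with $2r^\delta<\varepsilon$, let $0<\eta\le p\le r/2$, $0<\widetilde\eta\le\widetilde p$ with $\widetilde p\le e^\varepsilon p$ and $e^{-\varepsilon}\le\widetilde\eta/\eta\le e^{\varepsilon}$, let $\widetilde q$ satisfy $\widetilde\eta\le\widetilde q\le r/2$, and let $F=D+H:B^m[r]\to\mathbb R^m$ satisfy (GT2)–(GT3). Then for every $V^u\in\mathscr M^u_{p,\eta}$ and every $V^s\in\mathscr M^s_{\widetilde q,\widetilde\eta}$, the intersection $F(V^u)\cap V^s$ consists of exactly one point.
   Context: $\|\cdot\|$ Euclidean; $B^n[r]$ balls at $0$; ${\rm Hol}_\delta(h)=\sup_{x\ne y}\|h(x)-h(y)\|/\|x-y\|^\delta$; $\|h\|_{C^0}=\sup\|h\|$. $\mathbb R^m=\mathbb R^d\times\mathbb R^{m-d}$. $\mathscr M^u_{p,\eta}$: graphs $\{(v,G(v)):v\in B^d[p]\}$; $\mathscr M^s_{q,\eta}$: graphs $\{(J(w),w):w\in B^{m-d}[q]\}$; the $C^{1+\delta}$ representing functions satisfy (AM1) value at $0$ of norm $\le10^{-3}\eta$, (AM2) derivative at $0$ of norm $\le\frac12\eta^\delta$, (AM3) $\|d\cdot\|_{C^0}+{\rm Hol}_\delta(d\cdot)\le\frac12$. (GT2): $D={\rm diag}(D_1,D_2)$ with $D_1$ on $\mathbb R^d$, $D_2$ on $\mathbb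 R^{m-d}$ invertible linear, $\|D_1^{-1}\|<e^{-\chi}$, $\|D_2\|<e^{-\chi}$. (GT3): $H:B^m[r]\to\mathbb R^m$ is $C^{1+\delta}$ with $\|H(0)\|<\varepsilon\eta$, $\|dH\|_{C^0(B^m[t])}<\varepsilon t^\delta$ for all $t\in[\eta,2p]$, ${\rm Hol}_\delta(dH)<\varepsilon$. *)

(* Defs.v *)
From HB Require Import structures.
From mathcomp Require Import all_boot all_order all_algebra.
From mathcomp Require Import all_classical all_reals all_analysis.
Set Implicit Arguments. Unset Strict Implicit. Unset Printing Implicit Defensive.
Import Order.TTheory GRing.Theory Num.Theory.
Local Open Scope ring_scope.
Local Open Scope classical_set_scope.

(* Points of R^n are row vectors 'rV[R]_n; linear maps act on the right: v *m A. *)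

Definition enorm (R : realType) (n : nat) (v : 'rV[R]_n) : R :=
  Num.sqrt (\sum_(i < n) (v ord0 i) ^+ 2).

Definition eball (R : realType) (n : nat) (t : R) : set 'rV[R]_n :=
  [set v | enorm v <= t].
Arguments eball {R} n t.

Definition opnorm (R : realType) (a b : nat) (A : 'M[R]_(a, b)) : R :=
  sup [set enorm (v *m A) | v in eball a 1].

Definition has_deriv_within (R : realType) (a b : nat) (S : set 'rV[R]_a)
  (f : 'rV[R]_a -> 'rV[R]_b) (df : 'rV[R]_a -> 'M[R]_(a, b)) : Prop :=
  forall x, S x -> forall e : R, 0 < e -> exists2 del : R, 0 < del &
    forall y, S y -> enorm (y - x) < del ->
      enorm (f y - f x - (y - x) *m df x) <= e * enorm (y - x).

Definition C0normM (R : realType) (a b : nat) (S : set 'rV[R]_a)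
  (h : 'rV[R]_a -> 'M[R]_(a, b)) : \bar R :=
  ereal_sup [set (opnorm (h x))%:E | x in S].

Definition HolM (R : realType) (a b : nat) (delta : R) (S : set 'rV[R]_a)
  (h : 'rV[R]_a -> 'M[R]_(a, b)) : \bar R :=
  ereal_sup [set z | exists x y, [/\ S x, S y, x != y &
     z = (opnorm (h x - h y) / (enorm (x - y)) `^ delta)%:E]].

(* G : B^d[p] -> R^k is the representing function of an element of M^u_{p,eta} *)
Definition unstable_rep (R : realType) (d k : nat) (delta p eta : R)
  (G : 'rV[R]_d -> 'rV[R]_k) : Prop :=
  exists dG : 'rV[R]_d -> 'M[R]_(d, k),
    has_deriv_within (eball d p) G dG /\
    enorm (G 0) <= 10^-3 * eta /\
    opnorm (dG 0) <= 2^-1 * eta `^ delta /\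
    (C0normM (eball d p) dG + HolM delta (eball d p) dG <= (2^-1)%:E)%E.

(* J : B^k[q] -> R^d is the representing function of an element of M^s_{q,eta} *)
Definition stable_rep (R : realType) (d k : nat) (delta q eta : R)
  (J : 'rV[R]_k -> 'rV[R]_d) : Prop :=
  exists dJ : 'rV[R]_k -> 'M[R]_(k, d),
    has_deriv_within (eball k q) J dJ /\
    enorm (J 0) <= 10^-3 * eta /\
    opnorm (dJ 0) <= 2^-1 * eta `^ delta /\
    (C0normM (eball k q) dJ + HolM delta (eball k q) dJ <= (2^-1)%:E)%E.

(* F = D + H with D = diag(D1, D2) acting on R^(d+k) = R^d x R^k *)
Definition diagF (R : realType) (d k : nat) (D1 : 'M[R]_d) (D2 : 'M[R]_k)
  (H : 'rV[R]_(d + k) -> 'rV[R]_(d + k)) (x : 'rV[R]_(d + k)) : 'rV[R]_(d + k) :=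
  x *m block_mx D1 0 0 D2 + H x.

(* Main.v *)
Require Import Defs.
From HB Require Import structures.
From mathcomp Require Import all_boot all_order all_algebra.
From mathcomp Require Import all_classical all_reals all_analysis.
From mathcomp Require Import ring lra.
Import Order.TTheory GRing.Theory Num.Theory.
Import numFieldNormedType.Exports.
Local Open Scope ring_scope.
Local Open Scope classical_set_scope.
Set Implicit Arguments. Unset Strict Implicit. Unset Printing Implicit Defensive.

Section Enorm.
Variable R : realType.

Definition dotr (n : nat) (u v : 'rV[R]_n) : R := \sum_(i < n) u ord0 i * v ord0 i.

Lemma enormE n (v : 'rV[R]_n) : enorm v = Num.sqrt (dotr v v).
Proof. by rewrite /enorm /dotr; congr Num.sqrt; apply: eq_bigr => i _; rewrite expr2. Qed.

Lemma dot_ge0 n (v : 'rV[R]_n) : 0 <= dotr v v.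
Proof. by apply: sumr_ge0 => i _; rewrite -expr2 sqr_ge0. Qed.

Lemma enorm_ge0 n (v : 'rV[R]_n) : 0 <= enorm v.
Proof. exact: sqrtr_ge0. Qed.

Lemma enorm_sq n (v : 'rV[R]_n) : enorm v ^+ 2 = dotr v v.
Proof. by rewrite enormE sqr_sqrtr // dot_ge0. Qed.

Lemma dotC n (u v : 'rV[R]_n) : dotr u v = dotr v u.
Proof. by apply: eq_bigr => i _; rewrite mulrC. Qed.

Lemma dotDl n (u w v : 'rV[R]_n) : dotr (u + w) v = dotr u v + dotr w v.
Proof. by rewrite /dotr -big_split; apply: eq_bigr => i _; rewrite mxE mulrDl. Qed.

Lemma dotZl n a (u v : 'rV[R]_n) : dotr (a *: u) v = a * dotr u v.
Proof. by rewrite /dotr mulr_sumr; apply: eq_bigr => i _; rewrite mxE mulrA. Qed.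

Lemma dotNl n (u v : 'rV[R]_n) : dotr (- u) v = - dotr u v.
Proof. by rewrite -scaleN1r dotZl mulN1r. Qed.

Lemma dotDr n (u w v : 'rV[R]_n) : dotr v (u + w) = dotr v u + dotr v w.
Proof. by rewrite dotC dotDl !(dotC v). Qed.

Lemma dotZr n a (u v : 'rV[R]_n) : dotr v (a *: u) = a * dotr v u.
Proof. by rewrite dotC dotZl dotC. Qed.

Lemma dotNr n (u v : 'rV[R]_n) : dotr v (- u) = - dotr v u.
Proof. by rewrite dotC dotNl dotC. Qed.

Lemma dot_eq0 n (v : 'rV[R]_n) : dotr v v = 0 -> v = 0.
Proof.
move=> h; apply/rowP => i; rewrite mxE.
have nn : forall j : 'I_n, xpredT j -> 0 <= v ord0 j * v ord0 j.
  by move=> j _; rewrite -expr2 sqr_ge0.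
have := @psumr_eq0P _ _ xpredT (fun i => v ord0 i * v ord0 i) nn h i isT.
by move/eqP; rewrite mulf_eq0 orbb => /eqP.
Qed.

Lemma enorm_eq0 n (v : 'rV[R]_n) : enorm v = 0 -> v = 0.
Proof. by move=> h; apply: dot_eq0; rewrite -enorm_sq h expr2 mulr0. Qed.


Lemma enormZ n a (v : 'rV[R]_n) : enorm (a *: v) = `|a| * enorm v.
Proof.
rewrite !enormE dotZl dotZr mulrA -expr2 sqrtrM ?sqr_ge0 //.
by rewrite sqrtr_sqr.
Qed.

Lemma enorm0 n : enorm (0 : 'rV[R]_n) = 0.
Proof.
have -> : (0:'rV[R]_n) = 0 *: 0 by rewrite scale0r.
by rewrite enormZ normr0 mul0r.
Qed.

Lemma dot0r n (u : 'rV[R]_n) : dotr u 0 = 0.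
Proof.
have -> : (0:'rV[R]_n) = 0 *: 0 by rewrite scale0r.
by rewrite dotZr mul0r.
Qed.

Lemma enormN n (v : 'rV[R]_n) : enorm (- v) = enorm v.
Proof. by rewrite -scaleN1r enormZ normrN normr1 mul1r. Qed.

Lemma enormB n (u v : 'rV[R]_n) : enorm (u - v) = enorm (v - u).
Proof. by rewrite -enormN opprB. Qed.

Lemma cauchy_schwarz n (u v : 'rV[R]_n) : dotr u v ^+ 2 <= dotr u u * dotr v v.
Proof.
have [v0|vn0] := eqVneq v 0.
  by rewrite v0 !dot0r expr2 !mulr0.
set a := dotr v v; set b := dotr u v.
have a0 : 0 < a.
  rewrite lt_neqAle dot_ge0 andbT eq_sym; apply/negP => /eqP /dot_eq0 h.
  by move/eqP: vn0; apply.
have := dot_ge0 (a *: u - b *: v).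
rewrite !(dotDl, dotDr, dotNl, dotNr, dotZl, dotZr) -/a -/b (dotC v u) -/b.
move=> h.
have e : a * (a * dotr u u - b * b) + (a * - (b * b) - b * - (b * a)) = a * (a * dotr u u - b ^+ 2).
  by rewrite expr2; ring.
rewrite e in h.
by move: h; rewrite pmulr_rge0 // subr_ge0 mulrC.
Qed.

Lemma dot_le n (u v : 'rV[R]_n) : dotr u v <= enorm u * enorm v.
Proof.
rewrite !enormE -sqrtrM ?dot_ge0 //.
apply: le_trans (ler_norm _) _.
by rewrite -sqrtr_sqr ler_sqrt ?mulr_ge0 ?dot_ge0 // cauchy_schwarz.
Qed.

Lemma enormD n (u v : 'rV[R]_n) : enorm (u + v) <= enorm u + enorm v.
Proof.
rewrite -(ler_pXn2r (isT : (0 < 2)%N)) ?nnegrE ?addr_ge0 ?enorm_ge0 //.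
rewrite enorm_sq !(dotDl, dotDr) sqrrD !enorm_sq (dotC v u).
have := dot_le u v; lra.
Qed.

Lemma enormBD n (u v w : 'rV[R]_n) : enorm (u - w) <= enorm (u - v) + enorm (v - w).
Proof. by apply: le_trans (enormD (u - v) (v - w)) ; rewrite addrA subrK. Qed.

Lemma enorm_entry n (v : 'rV[R]_n) i : `|v ord0 i| <= enorm v.
Proof.
rewrite -(ler_pXn2r (isT : (0 < 2)%N)) ?nnegrE ?enorm_ge0 // enorm_sq.
rewrite real_normK ?num_real // /dotr (bigD1 i) //= expr2 lerDl.
by apply: sumr_ge0 => j _; rewrite -expr2 sqr_ge0.
Qed.

Lemma enorm_entries n (v : 'rV[R]_n) a : 0 <= a -> (forall i, `|v ord0 i| <= a) ->
  enorm v <= Num.sqrt n%:R * a.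
Proof.
move=> a0 h; rewrite enormE.
have -> : Num.sqrt n%:R * a = Num.sqrt (n%:R * a^+2).
  by rewrite sqrtrM ?ler0n // sqrtr_sqr ger0_norm.
rewrite ler_sqrt ?mulr_ge0 ?ler0n ?sqr_ge0 //.
have -> : n%:R * a ^+ 2 = \sum_(i < n) a ^+ 2 by rewrite sumr_const card_ord mulr_natl.
apply: ler_sum => i _; rewrite -expr2 -real_normK ?num_real //.
by rewrite ler_pXn2r ?nnegrE ?normr_ge0.
Qed.

Lemma enorm_row_mx n1 n2 (a : 'rV[R]_n1) (b : 'rV[R]_n2) :
  enorm (row_mx a b) ^+ 2 = enorm a ^+ 2 + enorm b ^+ 2.
Proof.
rewrite !enorm_sq /dotr big_split_ord /=.
by congr (_ + _); apply: eq_bigr => i _; rewrite ?row_mxEl ?row_mxEr.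
Qed.

Lemma enorm_row_mx_le n1 n2 (a : 'rV[R]_n1) (b : 'rV[R]_n2) :
  enorm (row_mx a b) <= enorm a + enorm b.
Proof.
rewrite -(ler_pXn2r (isT : (0 < 2)%N)) ?nnegrE ?addr_ge0 ?enorm_ge0 //.
rewrite enorm_row_mx sqrrD.
have := mulr_ge0 (enorm_ge0 a) (enorm_ge0 b); lra.
Qed.

Lemma enorm_lsub n1 n2 (x : 'rV[R]_(n1 + n2)) : enorm (lsubmx x) <= enorm x.
Proof.
rewrite -(ler_pXn2r (isT : (0 < 2)%N)) ?nnegrE ?enorm_ge0 //.
by rewrite -{2}(hsubmxK x) enorm_row_mx lerDl sqr_ge0.
Qed.

Lemma enorm_rsub n1 n2 (x : 'rV[R]_(n1 + n2)) : enorm (rsubmx x) <= enorm x.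
Proof.
rewrite -(ler_pXn2r (isT : (0 < 2)%N)) ?nnegrE ?enorm_ge0 //.
by rewrite -{2}(hsubmxK x) enorm_row_mx lerDr sqr_ge0.
Qed.

End Enorm.

Section Op.
Variable R : realType.

Lemma enorm_sum n m (F : 'I_m -> 'rV[R]_n) :
  enorm (\sum_(i < m) F i) <= \sum_(i < m) enorm (F i).
Proof.
elim/big_ind2: _ => //; first by rewrite enorm0.
by move=> x1 x2 y1 y2 h1 h2; apply: le_trans (enormD _ _) _; apply: lerD.
Qed.

Lemma opnorm_has_sup a b (A : 'M[R]_(a, b)) :
  has_sup [set enorm (v *m A) | v in eball a 1].
Proof.
split; first by exists (enorm (0 *m A)), 0 => //; rewrite /eball /= enorm0.
exists (\sum_(i < a) enorm (row i A)) => _ [v vb <-].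
rewrite mulmx_sum_row; apply: le_trans (enorm_sum _) _.
apply: ler_sum => i _; rewrite enormZ.
apply: le_trans (ler_wpM2r (enorm_ge0 _) (le_trans (enorm_entry v i) vb)) _.
by rewrite mul1r.
Qed.

Lemma opnorm_ge a b (A : 'M[R]_(a, b)) v : enorm v <= 1 -> enorm (v *m A) <= opnorm A.
Proof. move=> vb; rewrite /opnorm; have h := sup_upper_bound (opnorm_has_sup A). by apply: h; exists v. Qed.

Lemma opnorm_ge0 a b (A : 'M[R]_(a, b)) : 0 <= opnorm A.
Proof.
by apply: le_trans (opnorm_ge A (v := 0) _); rewrite ?mul0mx enorm0 // ler01.
Qed.

Lemma opnorm_le a b (A : 'M[R]_(a, b)) v : enorm (v *m A) <= opnorm A * enorm v.
Proof.
have [->|vn0] := eqVneq v 0; first by rewrite mul0mx !enorm0 mulr0.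
have vp : 0 < enorm v.
  rewrite lt_neqAle enorm_ge0 andbT eq_sym; apply/negP => /eqP /enorm_eq0 h.
  by move/eqP: vn0; apply.
have := opnorm_ge A (v := (enorm v)^-1 *: v).
rewrite enormZ -scalemxAl enormZ ger0_norm ?invr_ge0 ?enorm_ge0 // mulVf ?gt_eqF //.
by move=> /(_ (lexx _)); rewrite -ler_pdivlMl ?invr_gt0 // invrK mulrC.
Qed.

Lemma eball_conv n t (x y : 'rV[R]_n) s : eball n t x -> eball n t y ->
  0 <= s <= 1 -> eball n t (x + s *: (y - x)).
Proof.
rewrite /eball /= => hx hy /andP[s0 s1].
have -> : x + s *: (y - x) = (1 - s) *: x + s *: y.
  by apply/rowP => i; rewrite !mxE; ring.
apply: le_trans (enormD _ _) _; rewrite !enormZ !ger0_norm ?subr_ge0 //.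
have -> : t = (1 - s) * t + s * t by ring.
by apply: lerD; apply: ler_wpM2l; rewrite ?subr_ge0.
Qed.

Lemma has_deriv_sub a b (S T : set 'rV[R]_a) f (df : 'rV[R]_a -> 'M[R]_(a, b)) :
  T `<=` S -> has_deriv_within S f df -> has_deriv_within T f df.
Proof.
move=> TS h x Tx e e0; have [del del0 hd] := h x (TS _ Tx) e e0.
by exists del => // y Ty; apply: hd; apply: TS.
Qed.

End Op.

Section MVT.
Variable R : realType.

Lemma enorm_gt0 n (v : 'rV[R]_n) : v != 0 -> 0 < enorm v.
Proof.
move=> vn0; rewrite lt_neqAle enorm_ge0 andbT eq_sym; apply/negP => /eqP /enorm_eq0 h.
by move/eqP: vn0; apply.
Qed.

Lemma mvt n m t L (f : 'rV[R]_n -> 'rV[R]_m) df :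
  has_deriv_within (eball n t) f df ->
  (forall z, eball n t z -> opnorm (df z) <= L) ->
  forall x y, eball n t x -> eball n t y -> enorm (f y - f x) <= L * enorm (y - x).
Proof.
move=> hd hL x y hx hy.
have L0 : 0 <= L by apply: le_trans (opnorm_ge0 _) (hL x hx).
have [exy|nxy] := eqVneq y x; first by rewrite exy !subrr !enorm0 mulr0.
set c := enorm (y - x).
have c0 : 0 < c by apply: enorm_gt0; rewrite subr_eq0.
apply/ler_addgt0Pr => e0 he0.
set e := e0 / c.
have he : 0 < e by rewrite divr_gt0.
set K := L + e.
have K0 : 0 <= K by rewrite /K; lra.
pose z s := x + s *: (y - x).
pose Q s := enorm (f (z s) - f x) <= K * s * c.
have zb : forall s, 0 <= s <= 1 -> eball n t (z s) by move=> s hs; apply: eball_conv.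
have zd : forall s s', z s - z s' = (s - s') *: (y - x).
  by move=> s s'; apply/rowP => i; rewrite !mxE; ring.
have loc : forall s0, 0 <= s0 <= 1 -> exists2 del, 0 < del & forall s, 0 <= s <= 1 ->
    `|s - s0| < del -> enorm (f (z s) - f (z s0)) <= K * `|s - s0| * c.
  move=> s0 hs0; have [d0 d0p hd0] := hd (z s0) (zb s0 hs0) e he.
  exists (d0 / c); first by rewrite divr_gt0.
  move=> s hs hss0.
  have hlt : enorm (z s - z s0) < d0 by rewrite zd enormZ -/c -ltr_pdivlMr.
  have h1 := hd0 (z s) (zb s hs) hlt.
  have h2 := opnorm_le (df (z s0)) (z s - z s0).
  have h3 := ler_wpM2r (enorm_ge0 (z s - z s0)) (hL _ (zb s0 hs0)).
  have h4 := enormD (f (z s) - f (z s0) - (z s - z s0) *m df (z s0)) ((z s - z s0) *m df (z s0)).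
  rewrite subrK in h4.
  move: h1 h2 h3 h4; rewrite !zd !enormZ -/c /K.
  set a := `|s - s0| * c.
  have -> : (L + e) * `|s - s0| * c = (L + e) * a by rewrite /a mulrA.
  lra.
have Q0 : Q 0.
  by rewrite /Q /z scale0r addr0 subrr enorm0 mulr0 mul0r.
have ext : forall u s, 0 <= u -> u <= s -> Q u ->
    enorm (f (z s) - f (z u)) <= K * (s - u) * c -> Q s.
  move=> u s hu hus hQ hs; rewrite /Q.
  apply: le_trans (enormBD _ (f (z u)) _) _.
  move: hQ hs; rewrite /Q.
  have -> : K * s * c = K * (s - u) * c + K * u * c by ring.
  lra.
pose A := [set s | (0 <= s <= 1) /\ forall u, 0 <= u <= s -> Q u].
have hA : has_sup A.
  split; first by exists 0; split; [by rewrite lexx ler01 | move=> u hu; have -> : u = 0 by lra].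
  by exists 1 => s [/andP[]].
set s0 := sup A.
have s00 : 0 <= s0.
  have h := sup_upper_bound hA; apply: h; split; [by rewrite lexx ler01 | move=> u hu; have -> : u = 0 by lra].
  exact: Q0.
have s01 : s0 <= 1 by apply: ge_sup; [case: hA | by move=> s [/andP[]]].
have C1 : forall u, 0 <= u -> u < s0 -> Q u.
  move=> u hu hus; have [a [_ ha] hlt] := sup_adherent (eps := s0 - u) (ltac:(lra)) hA.
  by apply: ha; apply/andP; split => //; rewrite -/s0 in hlt; lra.
have [del delp hdel] := loc s0 (ltac:(apply/andP; split => //)).
have C2 : Q s0.
  have [->|s0p] := eqVneq s0 0; first exact: Q0.
  have s0p' : 0 < s0 by rewrite lt_neqAle eq_sym s0p s00.
  pose u := if del / 2 < s0 then s0 - del / 2 else 0.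
  have hu : 0 <= u < s0 /\ s0 - u < del.
    rewrite /u; case: ltP => h; split; try (apply/andP; split); lra.
  case: hu => /andP[hu0 hu1] hu2.
  apply: (ext u) => //; first exact: ltW.
    exact: C1.
  rewrite enormB; have := hdel u (ltac:(apply/andP; split; lra)).
  rewrite distrC ger0_norm ?subr_ge0 ?(ltW hu1) //.
  by move=> /(_ (ltac:(lra))); rewrite enormB.
have C3 : s0 = 1.
  apply/eqP; rewrite eq_le s01 /=; rewrite leNgt; apply/negP => hlt.
  pose u := if s0 + del / 2 <= 1 then s0 + del / 2 else 1.
  have hu : s0 < u <= 1 /\ u - s0 < del.
    rewrite /u; case: (leP (s0 + del / 2) 1) => h; split; try (apply/andP; split); lra.
  case: hu => /andP[hu0 hu1] hu2.
  have Au : A u.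
    split; first by apply/andP; split => //; lra.
    move=> u' /andP[hu'0 hu'1].
    have [h|h|->] := ltgtP u' s0; [exact: C1 | | exact: C2].
    apply: (ext s0) => //; first exact: ltW.
    have := hdel u' (ltac:(apply/andP; split; lra)).
    rewrite ger0_norm ?subr_ge0 ?(ltW h) //.
    by move=> /(_ (ltac:(lra))).
  have := sup_upper_bound hA Au; rewrite -/s0; lra.
move: C2; rewrite C3 /Q /z scale1r.
have -> : x + (y - x) = y by rewrite addrC subrK.
rewrite /K mulr1.
have -> : (L + e) * c = L * c + e0 by rewrite mulrDl /e divfK ?gt_eqF.
by [].
Qed.

End MVT.

Section Fix.
Variable R : realType.

Lemma geo_small_N (th K e : R) : 0 <= th -> th < 1 -> 0 <= K -> 0 < e ->
  exists N : nat, K * th ^+ N < e.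
Proof.
move=> th0 th1 K0 e0.
have := cvg_expr (z := th); rewrite ger0_norm // => /(_ th1).
move=> /cvgr0_norm_lt /(_ (e / (K + 1))) [].
  by rewrite divr_gt0 //; lra.
move=> N _ HN; exists N; have := HN N (leqnn N) => /=.
rewrite ger0_norm ?exprn_ge0 // => h.
apply: le_lt_trans (ler_wpM2r (exprn_ge0 N th0) (_ : K <= K + 1)) _; first lra.
have K1 : 0 < K + 1 by lra.
by rewrite mulrC -ltr_pdivlMr.
Qed.

Lemma geo_small (th K x b : R) : 0 <= th -> th < 1 -> 0 <= K ->
  (forall m : nat, x <= b + K * th ^+ m) -> x <= b.
Proof.
move=> th0 th1 K0 h; apply/ler_addgt0Pr => e e0.
have [N hN] := geo_small_N th0 th1 K0 e0.
by apply: le_trans (h N) _; lra.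
Qed.

Lemma real_cauchy (u : nat -> R) (C th : R) : 0 <= th -> th < 1 -> 0 <= C ->
  (forall m j, `|u m - u (m + j)%N| <= C * th ^+ m) -> cvgn u.
Proof.
move=> th0 th1 C0 h.
apply/cauchy_cvgP; apply: cauchy_exP => e e0.
have [N hN] := geo_small_N th0 th1 C0 e0.
exists (u N); rewrite /fmapE; exists N => // n /= hn.
rewrite -ball_normE /ball_ /=.
have := h N (n - N)%N; rewrite subnKC // => h1.
by apply: le_lt_trans h1 hN.
Qed.


Lemma fixpt n (a th : R) (T : 'rV[R]_n -> 'rV[R]_n) : 0 <= a -> 0 <= th -> th < 1 ->
  (forall v, eball n a v -> eball n a (T v)) ->
  (forall v w, eball n a v -> eball n a w -> enorm (T v - T w) <= th * enorm (v - w)) ->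
  exists2 v, eball n a v & T v = v.
Proof.
move=> a0 th0 th1 Tb Tc.
pose y m := iter m T 0.
have yb : forall m, eball n a (y m).
  elim=> [|m IH]; first by rewrite /eball /= /y /= enorm0.
  by rewrite /y iterS; apply: Tb.
set c := enorm (y 1%N - y 0%N).
have c0 : 0 <= c by apply: enorm_ge0.
set C := c / (1 - th).
have C0 : 0 <= C by rewrite divr_ge0 // subr_ge0 ltW.
have cC : c = C * (1 - th) by rewrite /C divfK // subr_eq0 gt_eqF.
have step : forall m, enorm (y m.+1 - y m) <= th ^+ m * c.
  elim=> [|m IH]; first by rewrite expr0 mul1r.
  have -> : y m.+2 = T (y m.+1) by [].
  have -> : y m.+1 = T (y m) by [].
  apply: le_trans (Tc _ _ (yb m.+1) (yb m)) _.
  by rewrite exprS -mulrA ler_wpM2l.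
have dist : forall m j, enorm (y m - y (m + j)%N) <= C * th ^+ m - C * th ^+ (m + j).
  move=> m; elim=> [|j IH]; first by rewrite addn0 subrr enorm0 subrr.
  apply: le_trans (enormBD _ (y (m + j)%N) _) _.
  rewrite addnS [enorm (y (m + j)%N - _)]enormB.
  have := step (m + j)%N; move: IH.
  rewrite cC exprS.
  set u := th ^+ (m + j).
  have -> : C * (th * u) = C * u - u * (C * (1 - th)) by ring.
  lra.
have distb : forall m j, enorm (y m - y (m + j)%N) <= C * th ^+ m.
  move=> m j; apply: le_trans (dist m j) _.
  by rewrite lerBlDr lerDl mulr_ge0 // exprn_ge0.
pose u (i : 'I_n) m := y m ord0 i.
have ucv : forall i, cvgn (u i).
  move=> i; apply: (real_cauchy (C := C) (th := th)) => // m j.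
  have := enorm_entry (y m - y (m + j)%N) i; rewrite !mxE => h.
  exact: le_trans h (distb m j).
pose L : 'rV[R]_n := \row_i lim (u i @ \oo).
have Lb : forall m i, `|L ord0 i - y m ord0 i| <= C * th ^+ m.
  move=> m i; rewrite mxE ler_norml; apply/andP; split.
    rewrite lerBrDr.
    apply: (cvgr_to_ge (ucv i)); near=> k.
    have hk : (m <= k)%N by near: k; exact: nbhs_infty_ge.
    have := enorm_entry (y m - y (m + (k - m))%N) i; rewrite subnKC // !mxE => h.
    have := distb m (k - m)%N; rewrite subnKC // => h0.
    have := le_trans h h0; rewrite /u ler_norml.
    by case/andP => _ h2; lra.
  rewrite lerBlDr.
  apply: (cvgr_to_le (ucv i)); near=> k.
  have hk : (m <= k)%N by near: k; exact: nbhs_infty_ge.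
  have := enorm_entry (y m - y (m + (k - m))%N) i; rewrite subnKC // !mxE => h.
  have := distb m (k - m)%N; rewrite subnKC // => h0.
  have := le_trans h h0; rewrite /u ler_norml.
  by case/andP => h1 _; lra.
set K := Num.sqrt n%:R * C.
have K0 : 0 <= K by rewrite mulr_ge0 ?sqrtr_ge0.
have LE : forall m, enorm (L - y m) <= K * th ^+ m.
  move=> m; rewrite /K -mulrA; apply: enorm_entries; first by rewrite mulr_ge0 ?exprn_ge0.
  by move=> i; rewrite !mxE; have := Lb m i; rewrite mxE.
have LB : eball n a L.
  rewrite /eball /=; apply: (geo_small th0 th1 K0) => m.
  have := enormD (L - y m) (y m); rewrite subrK => h.
  apply: le_trans h _; rewrite addrC; apply: lerD; [exact: yb | exact: LE].
exists L => //.
apply/eqP; rewrite -subr_eq0; apply/eqP/enorm_eq0.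
apply/le_anti; rewrite enorm_ge0 andbT.
apply: (geo_small (K := 2 * K) th0 th1 _) => [|m]; first by rewrite mulr_ge0.
apply: le_trans (enormBD _ (T (y m)) _) _.
have h1 := Tc _ _ LB (yb m).
have h2 : T (y m) = y m.+1 by [].
rewrite h2 in h1 *; rewrite (enormB (y m.+1)).
have h3 := LE m.+1.
have h4 := ler_wpM2l th0 (LE m).
rewrite exprS in h3.
have thK : th * (K * th ^+ m) <= K * th ^+ m.
  have hX : 0 <= K * th ^+ m by rewrite mulr_ge0 ?exprn_ge0.
  by have := ler_wpM2r hX (ltW th1); rewrite mul1r.
have e1 : K * (th * th ^+ m) = th * (K * th ^+ m) by ring.
rewrite e1 in h3.
lra.
Unshelve. all: by end_near.
Qed.

End Fix.

Section Main.
Variable R : realType.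

Lemma rep_lip a b (delta p : R) (G : 'rV[R]_a -> 'rV[R]_b) dG :
  has_deriv_within (eball a p) G dG ->
  (C0normM (eball a p) dG + HolM delta (eball a p) dG <= (2^-1)%:E)%E ->
  forall x y, eball a p x -> eball a p y -> enorm (G y - G x) <= 2^-1 * enorm (y - x).
Proof.
move=> hd hs x y hx hy.
have [->|nxy] := eqVneq y x; first by rewrite !subrr !enorm0 mulr0.
have Hol0 : (0 <= HolM delta (eball a p) dG)%E.
  apply: le_trans (ereal_sup_ubound _); last first.
    exists y, x; split => //.
  by rewrite lee_fin divr_ge0 ?opnorm_ge0 ?powR_ge0.
have C0 : (C0normM (eball a p) dG <= (2^-1)%:E)%E.
  by apply: le_trans hs; apply: leeDl.
apply: (mvt hd) => // z hz.
have : ((opnorm (dG z))%:E <= (2^-1)%:E)%E.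
  by apply: le_trans C0; apply: ereal_sup_ubound; exists z.
by rewrite lee_fin.
Qed.


Lemma lsubB n1 n2 (a b : 'rV[R]_(n1 + n2)) : lsubmx (a - b) = lsubmx a - lsubmx b.
Proof. by apply/rowP => i; rewrite !mxE. Qed.
Lemma rsubB n1 n2 (a b : 'rV[R]_(n1 + n2)) : rsubmx (a - b) = rsubmx a - rsubmx b.
Proof. by apply/rowP => i; rewrite !mxE. Qed.

Lemma contr_mx a (A : 'M[R]_a) (c : R) : opnorm A < c -> c <= 1 ->
  forall x : 'rV[R]_a, enorm (x *m A) <= enorm x.
Proof.
move=> h c1 x; apply: le_trans (opnorm_le A x) _.
by rewrite ler_piMl ?enorm_ge0 //; apply: ltW; apply: lt_le_trans h c1.
Qed.

End Main.

Unset Implicit Arguments.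

Theorem lemmaA4 (R : realType) (d k : nat) (delta chi : R) :
  0 < delta -> delta < 1 -> 0 < chi ->
  exists2 eps0 : R, 0 < eps0 &
  forall eps : R, 0 < eps -> eps < eps0 ->
  forall r : R, 0 < r -> 2 * r `^ delta < eps ->
  forall eta p : R, 0 < eta -> eta <= p -> p <= r / 2 ->
  forall etat pt : R, 0 < etat -> etat <= pt -> pt <= expR eps * p ->
    expR (- eps) <= etat / eta -> etat / eta <= expR eps ->
  forall qt : R, etat <= qt -> qt <= r / 2 ->
  forall (D1 : 'M[R]_d) (D2 : 'M[R]_k),
    D1 \in unitmx -> D2 \in unitmx ->
    opnorm (invmx D1) < expR (- chi) -> opnorm D2 < expR (- chi) ->
  forall (H : 'rV[R]_(d + k) -> 'rV[R]_(d + k))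
         (dH : 'rV[R]_(d + k) -> 'M[R]_(d + k, d + k)),
    has_deriv_within (eball (d + k) r) H dH ->
    enorm (H 0) < eps * eta ->
    (forall t : R, eta <= t -> t <= 2 * p ->
       (C0normM (eball (d + k) t) dH < (eps * t `^ delta)%:E)%E) ->
    (HolM delta (eball (d + k) r) dH < eps%:E)%E ->
  forall (G : 'rV[R]_d -> 'rV[R]_k) (J : 'rV[R]_k -> 'rV[R]_d),
    unstable_rep delta p eta G ->
    stable_rep delta qt etat J ->
    exists! y : 'rV[R]_(d + k),
      (exists2 v, eball d p v & y = diagF D1 D2 H (row_mx v (G v))) /\
      (exists2 w, eball k qt w & y = row_mx (J w) w).
Proof.
move=> delta0 delta1 chi0.
exists (1 / 10); first by lra.
move=> eps e0 e1 r r0 hr eta p eta0 hetap hpr etat pt etat0 hetpt hpt hlow hupp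
  qt hqt1 hqt2 D1 D2 uD1 uD2 hD1 hD2 H dH hdH hH0 hC0 hHol G J hG hJ.
have t3 : (10:R)^-3 = 1/1000 by rewrite !exprS expr0 mulr1 -!natrM div1r.
have ec1 : expR (- chi) <= 1 by rewrite ltW // expR_lt1 oppr_lt0.
have cD1 := contr_mx hD1 ec1.
have cD2 := contr_mx hD2 ec1.
have eN : 1 - eps <= expR (- eps) by have := expR_ge1Dx (- eps); lra.
have etal : 9 / 10 * eta <= etat.
  have : 9 / 10 <= etat / eta by lra.
  by rewrite ler_pdivlMr.
have eP : expR eps <= 10 / 9.
  have h1 := expRxMexpNx_1 eps; have h2 := expR_gt0 eps.
  have h3 : expR eps * (1 - eps) <= expR eps * expR (- eps) by rewrite ler_wpM2l // ltW.
  have h4 : expR eps * (9 / 10) <= expR eps * (1 - eps) by rewrite ler_wpM2l ?ltW //; lra.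
  lra.
have etau : etat <= 10 / 9 * eta.
  have : etat / eta <= 10 / 9 by lra.
  by rewrite ler_pdivrMr.
have p2 : (2 * p) `^ delta <= 1.
  have : (2 * p) `^ delta <= r `^ delta.
    by apply: ge0_ler_powR; rewrite ?nnegrE; lra.
  lra.
case: hG => dG [dGd [G0 [_ hGs]]].
rewrite t3 in G0.
have LG := rep_lip dGd hGs.
case: hJ => dJ [dJd [J0 [_ hJs]]].
rewrite t3 in J0.
have LJ := rep_lip dJd hJs.
have LH : forall x y, eball (d + k) (2 * p) x -> eball (d + k) (2 * p) y ->
    enorm (H y - H x) <= eps * enorm (y - x).
  apply: (mvt (has_deriv_sub _ hdH)).
    by move=> z; rewrite /eball /= => h; apply: le_trans h _; lra.
  move=> z hz.
  have := hC0 (2 * p) (ltac:(lra)) (lexx _).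
  have : ((opnorm (dH z))%:E <= C0normM (eball (d + k) (2 * p)) dH)%E.
    by apply: ereal_sup_ubound; exists z.
  move=> h1 h2; have := le_lt_trans h1 h2; rewrite lte_fin => h3.
  apply: ltW; apply: lt_le_trans h3 _.
  by rewrite ler_piMr //; lra.

clear hC0 hHol hdH hlow hupp hpt hetpt hr p2 eN eP t3 ec1 hD1 hD2 dGd hGs dJd hJs.
pose P v := row_mx v (G v) : 'rV[R]_(d + k).
pose psi v := G v *m D2 + rsubmx (H (P v)).
pose T v := (J (psi v) - lsubmx (H (P v))) *m invmx D1.
have b0 : forall n (t : R), 0 <= t -> eball n t 0 by move=> n t ht; rewrite /eball /= enorm0.
have Gb : forall v, eball d p v -> enorm (G v) <= eta / 1000 + 2^-1 * enorm v.
  move=> v hv; have p0 : 0 <= p by lra.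
  have := LG 0 v (b0 d p p0) hv; rewrite subr0 => h.
  have := enormD (G v - G 0) (G 0); rewrite subrK; clear -h G0; lra.
have PB : forall v, eball d p v -> enorm (P v) <= eta / 1000 + 3 / 2 * enorm v.
  move=> v hv; apply: le_trans (enorm_row_mx_le _ _) _; have := Gb v hv; clear; lra.
have Pb : forall v, eball d p v -> eball (d + k) (2 * p) (P v).
  move=> v hv; rewrite /eball /=; apply: le_trans (PB v hv) _.
  move: hv; rewrite /eball /=; clear -hetap eta0; lra.
have LP : forall v v', eball d p v -> eball d p v' ->
    enorm (P v - P v') <= 3 / 2 * enorm (v - v').
  move=> v v' hv hv'; rewrite /P opp_row_mx add_row_mx.
  apply: le_trans (enorm_row_mx_le _ _) _.
  have := LG v' v hv' hv; clear; lra.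
have LHP : forall v v', eball d p v -> eball d p v' ->
    enorm (H (P v) - H (P v')) <= eps * (3 / 2 * enorm (v - v')).
  move=> v v' hv hv'; apply: le_trans (LH _ _ (Pb _ hv') (Pb _ hv)) _.
  by apply: ler_wpM2l; [exact: ltW | exact: LP].
have Lpsi : forall v v', eball d p v -> eball d p v' ->
    enorm (psi v - psi v') <= (2^-1 + 3 / 2 * eps) * enorm (v - v').
  move=> v v' hv hv'.
  have -> : psi v - psi v' = (G v - G v') *m D2 + rsubmx (H (P v) - H (P v')).
    by rewrite rsubB mulmxBl /psi; rewrite opprD !addrA; congr (_ + _); rewrite addrAC.
  apply: le_trans (enormD _ _) _.
  have h1 := le_trans (cD2 (G v - G v')) (LG v' v hv' hv).
  have h2 := le_trans (enorm_rsub _) (LHP v v' hv hv').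
  have e : (2^-1 + 3 / 2 * eps) * enorm (v - v') =
     2^-1 * enorm (v - v') + eps * (3 / 2 * enorm (v - v')) by ring.
  by rewrite e; apply: lerD.
have LT : forall v v', eball d p v -> eball d p v' -> eball k qt (psi v) -> eball k qt (psi v') ->
    enorm (T v - T v') <= 2^-1 * enorm (v - v').
  move=> v v' hv hv' hp hp'.
  rewrite /T -mulmxBl; apply: le_trans (cD1 _) _.
  have -> : J (psi v) - lsubmx (H (P v)) - (J (psi v') - lsubmx (H (P v')))
     = (J (psi v) - J (psi v')) - lsubmx (H (P v) - H (P v')).
    by rewrite lsubB; apply/rowP => i; rewrite !mxE; ring.
  apply: le_trans (enormD _ _) _; rewrite enormN.
  have h1 := LJ _ _ hp' hp.
  have h2 := le_trans (enorm_lsub _) (LHP v v' hv hv').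
  have h3 := Lpsi v v' hv hv'.
  have h0 := enorm_ge0 (v - v').
  have h4 := ler_wpM2l (ltac:(clear; lra) : (0:R) <= 2^-1) h3.
  have e : eps * (3 / 2 * enorm (v - v')) = 3 / 2 * (eps * enorm (v - v')) by ring.
  have e' : 2^-1 * ((2^-1 + 3 / 2 * eps) * enorm (v - v'))
     = 2^-1 * 2^-1 * enorm (v - v') + 3 / 4 * (eps * enorm (v - v')) by field.
  rewrite e in h2; rewrite e' in h4.
  have h5 : eps * enorm (v - v') <= 1 / 10 * enorm (v - v') by rewrite ler_wpM2r // ltW.
  clear -h0 h1 h2 h4 h5; lra.
have vp : forall v, eball d eta v -> eball d p v.
  by move=> v; rewrite /eball /= => h; apply: le_trans h hetap.
have eta0' : 0 <= eta by apply: ltW.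
have Gbe : forall v, eball d eta v -> enorm (G v) <= 501 / 1000 * eta.
  move=> v hv; have := Gb v (vp v hv); move: hv; rewrite /eball /=.
  by clear -eta0'; lra.
have HPb : forall v, eball d eta v -> enorm (H (P v)) <= 26 / 100 * eta.
  move=> v hv.
  have p20 : 0 <= 2 * p by clear -eta0 hetap; lra.
  have h1 := LH 0 (P v) (b0 (d + k) (2 * p) p20) (Pb v (vp v hv)).
  rewrite subr0 in h1.
  have h2 : enorm (P v) <= 1501 / 1000 * eta.
    have := PB v (vp v hv); move: hv; rewrite /eball /=; clear -eta0'; lra.
  have h3 : eps * enorm (P v) <= 1 / 10 * (1501 / 1000 * eta).
    apply: ler_pM; [exact: ltW | exact: enorm_ge0 | exact: ltW | exact: h2].
  have h4 := enormD (H (P v) - H 0) (H 0); rewrite subrK in h4.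
  have h5 : eps * eta <= 1 / 10 * eta by rewrite ler_wpM2r // ltW.
  clear -h1 h3 h4 h5 hH0 eta0'; lra.
have psib : forall v, eball d eta v -> enorm (psi v) <= 77 / 100 * eta.
  move=> v hv; apply: le_trans (enormD _ _) _.
  have h1 := le_trans (cD2 (G v)) (Gbe v hv).
  have h2 := le_trans (enorm_rsub _) (HPb v hv).
  clear -h1 h2 eta0'; lra.
have psiq : forall v, eball d eta v -> eball k qt (psi v).
  move=> v hv; rewrite /eball /=; have := psib v hv.
  clear -etal hqt1 eta0'; lra.
have Tb : forall v, eball d eta v -> eball d eta (T v).
  move=> v hv; rewrite /eball /= /T; apply: le_trans (cD1 _) _.
  apply: le_trans (enormD _ _) _; rewrite enormN.
  have q0 : 0 <= qt by clear -etat0 hqt1; lra.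
  have h1 := LJ 0 (psi v) (b0 _ _ q0) (psiq v hv); rewrite !subr0 in h1.
  have h2 := enormD (J (psi v) - J 0) (J 0); rewrite subrK in h2.
  have h3 := psib v hv.
  have h4 := le_trans (enorm_lsub _) (HPb v hv).
  clear -h1 h2 h3 h4 J0 etau eta0'; lra.
have [vs hvs Tvs] := fixpt (a := eta) (th := 2^-1) (ltW eta0) (ltac:(clear; lra))
   (ltac:(clear; lra)) Tb (fun v w hv hw => LT v w (vp v hv) (vp w hw) (psiq v hv) (psiq w hw)).
have dF : forall v, diagF D1 D2 H (P v) = row_mx (v *m D1 + lsubmx (H (P v))) (psi v).
  move=> v; rewrite /diagF /P mul_row_block !mulmx0 addr0 add0r.
  by rewrite -{1}(hsubmxK (H (row_mx v (G v)))) add_row_mx.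
have eqT : forall v, T v = v -> v *m D1 + lsubmx (H (P v)) = J (psi v).
  move=> v hT; have : T v *m D1 = v *m D1 by rewrite hT.
  by rewrite /T mulmxKV // => <-; rewrite subrK.
have Teq : forall v, v *m D1 + lsubmx (H (P v)) = J (psi v) -> T v = v.
  by move=> v h; rewrite /T -h addrK mulmxK.
exists (diagF D1 D2 H (P vs)); split.
  split; first by exists vs => //; apply: vp.
  by exists (psi vs); [apply: psiq | rewrite dF (eqT vs Tvs)].
move=> y [[v' hv' ->] [w' hw' e]].
rewrite dF in e; case/eq_row_mx: e => f1 f2.
have Tv' : T v' = v' by apply: Teq; rewrite f1 f2.
have hpsi' : eball k qt (psi v') by rewrite f2.
have := LT vs v' (vp _ hvs) hv' (psiq _ hvs) hpsi'; rewrite Tvs Tv' => h.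
have : enorm (vs - v') = 0.
  by have := enorm_ge0 (vs - v'); clear -h; lra.
by move/enorm_eq0/eqP; rewrite subr_eq0 => /eqP ->.
Qed.
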